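(* Let $\mathbb{K}$ be a field of characteristic $0$, $R=\mathbb{K}[x_1,\dots,x_n]$, and $I\subset R$ a monomial ideal such that $A=R/I$ is a level Artinian graded algebra of socle degree $t$. Let $\ell=x_1+\dots+x_n$. Then for every integer $k<t/2$ the multiplication maps $\times\ell^{t-2k}:A_k\to A_{t-k}$ and $\times\ell:A_k\to A_{k+1}$ are injective.
   Context: $A=R/I$ is standard graded, $A=A_0\oplus A_1\oplus\dots\oplus A_t$ with $A_t\neq 0$ (Artinian). The socle of $A$ is $\{f\in A: af=0 \text{ for all } a\in A_1\}$; $A$ is level if its socle equals $A_t$, and then $t$ is the socle degree. *)

(* Defs.v *)
From HB Require Import structures.
From mathcomp Require Import all_boot all_order all_algebra.
From mathcomp Require Import mpoly.
Set Implicit Arguments. Unset Strict Implicit. Unset Printing Implicit Defensive.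
Import GRing.Theory.
Local Open Scope ring_scope.

Definition homog_deg (n : nat) (K : fieldType) (d : nat) (p : {mpoly K[n]}) : bool :=
  p \is @ishomog1 n K d (@mdeg n).

Definition is_ideal (n : nat) (K : fieldType) (I : {pred {mpoly K[n]}}) : Prop :=
  [/\ 0 \in I,
      (forall p q, p \in I -> q \in I -> p + q \in I) &
      (forall r p, p \in I -> r * p \in I)].

(* I is a monomial ideal: an ideal generated by monomials, i.e. an ideal
   such that every monomial occurring in an element of I lies in I. *)
Definition is_monomial_ideal (n : nat) (K : fieldType) (I : {pred {mpoly K[n]}}) : Prop :=
  is_ideal I /\
  (forall p m, p \in I -> m \in msupp p -> 'X_[m] \in I).

Definition graded_piece_zero (n : nat) (K : fieldType) (I : {pred {mpoly K[n]}}) (d : nat) : Prop :=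
  forall p : {mpoly K[n]}, homog_deg d p -> p \in I.

Definition artinian_socle_degree (n : nat) (K : fieldType) (I : {pred {mpoly K[n]}}) (t : nat) : Prop :=
  (forall d, (t < d)%N -> graded_piece_zero I d) /\ ~ graded_piece_zero I t.

Definition in_socle (n : nat) (K : fieldType) (I : {pred {mpoly K[n]}}) (f : {mpoly K[n]}) : Prop :=
  forall a : {mpoly K[n]}, homog_deg 1 a -> a * f \in I.

Definition is_level (n : nat) (K : fieldType) (I : {pred {mpoly K[n]}}) (t : nat) : Prop :=
  forall f : {mpoly K[n]},
    in_socle I f <-> exists g : {mpoly K[n]}, homog_deg t g /\ f - g \in I.

Definition mult_injective (n : nat) (K : fieldType) (I : {pred {mpoly K[n]}})
  (g : {mpoly K[n]}) (k : nat) : Prop :=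
  forall f : {mpoly K[n]}, homog_deg k f -> g * f \in I -> f \in I.

Definition ell (n : nat) (K : fieldType) : {mpoly K[n]} := \sum_(i < n) 'X_i.

(* Main.v *)
Require Import Defs.
From HB Require Import structures.
From mathcomp Require Import all_boot all_order all_algebra.
From mathcomp Require Import mpoly.
From mathcomp Require Import ring zify.
Set Implicit Arguments. Unset Strict Implicit. Unset Printing Implicit Defensive.
Import GRing.Theory.
Local Open Scope ring_scope.

Section SL2.
Variables (K : fieldType) (n : nat) (M : 'X_{1..n}).
Local Notation mon := 'X_{1..n}.

Definition Lop (c : mon -> K) (b : mon) : K :=
  if (b <= M)%MM then \sum_(i < n) (if (0 < b i)%N then c (b - U_(i))%MM else 0) else 0.
Definition Fop (c : mon -> K) (b : mon) : K :=
  \sum_(i < n) ((b i).+1 * (M i - b i))%:R * c (b + U_(i))%MM.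

Lemma mnm_swap (b : mon) (i j : 'I_n) : i != j -> (b - U_(i) + U_(j) = b + U_(j) - U_(i))%MM.
Proof.
move=> ij; apply/mnmP=> l; rewrite !(mnmDE, mnmBE, mnm1E).
have [il|il] := eqVneq i l; have [jl|jl] := eqVneq j l => /=; try lia.
by move: ij; rewrite il jl eqxx.
Qed.

Lemma commut c b : (b <= M)%MM ->
  Lop (Fop c) b + (mdeg M)%:R * c b = Fop (Lop c) b + (2 * mdeg b)%:R * c b.
Proof.
move=> bM; have bMi := mnm_lepP bM.
rewrite /Lop bM.
have -> : Fop (fun b0 => if (b0 <= M)%MM then \sum_(i < n) (if (0 < b0 i)%N then c (b0 - U_(i))%MM else 0) else 0) b
   = \sum_(j < n) \sum_(i < n) ((b j).+1 * (M j - b j))%:R * (if (0 < (b + U_(j))%MM i)%N then c (b + U_(j) - U_(i))%MM else 0).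
  rewrite /Fop; apply: eq_bigr => j _.
  case: ifP => bj; first by rewrite mulr_sumr.
  have -> : (M j - b j = 0)%N.
    apply/eqP; rewrite subn_eq0; move: bj; apply: contraFT; rewrite -ltnNge => Mj.
    apply/mnm_lepP => l.
    rewrite mnmDE mnm1E; case: (eqVneq j l) => [<-|]; last by rewrite addn0.
    by rewrite addn1.
  by rewrite muln0 mul0r big1 // => i _; rewrite mul0r.
rewrite exchange_big /=.
have -> : (mdeg M)%:R * c b = \sum_i (M i)%:R * c b by rewrite mdegE natr_sum mulr_suml.
have -> : (2 * mdeg b)%:R * c b = \sum_i (2 * b i)%:R * c b.
  by rewrite mdegE big_distrr natr_sum mulr_suml.
rewrite -!big_split; apply: eq_bigr => i _ /=.
rewrite (bigD1 i) //= mnmDE mnm1E eqxx addn1 /= addmK.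
have bMi' := bMi i.
case: (posnP (b i)) => [bi0|bipos].
  rewrite bi0 muln0 mul0r addr0 mul1n subn0 add0r big1 ?addr0 //.
  by move=> j ji; rewrite mnmDE mnm1E (negbTE ji) addn0 bi0 /= mulr0.
rewrite /Fop (bigD1 i) //=.
have Ub : (U_(i) <= b)%MM.
  by apply/mnm_lepP => l; rewrite mnm1E; case: eqP => [<-|] /=; lia.
rewrite (submK Ub).
rewrite mnmBE mnm1E eqxx.
have -> : \sum_(j < n | j != i) (((b - U_(i))%MM j).+1 * (M j - (b - U_(i))%MM j))%:R * c (b - U_(i) + U_(j))%MM
  = \sum_(j < n | j != i) ((b j).+1 * (M j - b j))%:R * (if (0 < (b + U_(j))%MM i)%N then c (b + U_(j) - U_(i))%MM else 0).
  apply: eq_bigr => j ji; rewrite mnmBE mnm1E eq_sym (negbTE ji) subn0 mnmDE mnm1E (negbTE ji) addn0 bipos.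
  by rewrite mnm_swap // eq_sym.
have key : ((b i - true).+1 * (M i - (b i - true)))%:R * c b + (M i)%:R * c b = ((b i).+1 * (M i - b i))%:R * c b + (2 * b i)%:R * c b.
  rewrite -!mulrDl -!natrD subn1 prednK //; congr (_%:R * _).
  have e: (M i - (b i).-1 = (M i - b i) + 1)%N by lia.
  rewrite e; nia.
set S := \sum_(j < n | j != i) _.
by rewrite !(addrC _ S) -!addrA; congr (S + _); exact: key.
Qed.

Definition homf k (c : mon -> K) := forall b, c b != 0 -> mdeg b = k.
Definition boxed (c : mon -> K) := forall b, c b != 0 -> (b <= M)%MM.

Lemma Lop_boxed c : boxed (Lop c).
Proof. by move=> b; rewrite /Lop; case: ifP => //; rewrite eqxx. Qed.

Lemma sumn0_ex (F : 'I_n -> K) : \sum_(i < n) F i != 0 -> exists i, F i != 0.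
Proof.
move=> H; apply/existsP; move: H; apply: contraNT; rewrite negb_exists => /forallP H.
by apply/eqP/big1 => i _; apply/eqP; move: (H i); rewrite negbK.
Qed.

Lemma mdeg_subU (b : mon) (i : 'I_n) : (0 < b i)%N -> mdeg b = (mdeg (b - U_(i))%MM).+1.
Proof.
move=> bi; have Ub : (U_(i) <= b)%MM.
  by apply/mnm_lepP => l; rewrite mnm1E; case: eqP => [<-|] /=; lia.
by rewrite -{1}(submK Ub) mdegD mdeg1 addn1.
Qed.

Lemma mdeg_addU (b : mon) (i : 'I_n) : mdeg (b + U_(i))%MM = (mdeg b).+1.
Proof. by rewrite mdegD mdeg1 addn1. Qed.

Lemma Lop_hom k c : homf k c -> homf k.+1 (Lop c).
Proof.
move=> hc b; rewrite /Lop; case: ifP => _; last by rewrite eqxx.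
move/sumn0_ex => [i]; case: ifP => bi; last by rewrite eqxx.
by move/hc => e; rewrite (mdeg_subU bi) e.
Qed.

Lemma Fop_hom k c : homf k c -> forall b, Fop c b != 0 -> (mdeg b).+1 = k.
Proof.
move=> hc b /sumn0_ex [i]; rewrite mulf_eq0 negb_or => /andP [_ /hc].
by rewrite mdeg_addU.
Qed.

Lemma Fop_boxed c : boxed c -> boxed (Fop c).
Proof.
move=> hc b /sumn0_ex [i]; rewrite mulf_eq0 negb_or => /andP [_ /hc].
by apply: lepm_trans; apply: lem_addr.
Qed.

Lemma Lop_ext c1 c2 : c1 =1 c2 -> Lop c1 =1 Lop c2.
Proof. by move=> e b; rewrite /Lop; case: ifP => // _; apply: eq_bigr => i _; rewrite e. Qed.

Lemma Fop_ext c1 c2 : c1 =1 c2 -> Fop c1 =1 Fop c2.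
Proof. by move=> e b; rewrite /Fop; apply: eq_bigr => i _; rewrite e. Qed.

Lemma iterL_ext m c1 c2 : c1 =1 c2 -> iter m Lop c1 =1 iter m Lop c2.
Proof. by elim: m => [//|m IH] e; apply: Lop_ext; apply: IH. Qed.

Lemma Lop_lin c1 c2 a b : Lop (fun b => c1 b + a * c2 b) b = Lop c1 b + a * Lop c2 b.
Proof.
rewrite /Lop; case: ifP => _; last by rewrite mulr0 addr0.
rewrite mulr_sumr -big_split; apply: eq_bigr => i _ /=.
by case: ifP => _ //; rewrite mulr0 addr0.
Qed.

Lemma Lop0 c : c =1 (fun _ => 0) -> Lop c =1 (fun _ => 0).
Proof.
move=> e b; rewrite (Lop_ext e) /Lop; case: ifP => // _.
by apply: big1 => i _; case: ifP.
Qed.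

Lemma Fop0 c : c =1 (fun _ => 0) -> Fop c =1 (fun _ => 0).
Proof. by move=> e b; rewrite (Fop_ext e) /Fop; apply: big1 => i _; rewrite mulr0. Qed.

Lemma iterL0 m c : c =1 (fun _ => 0) -> iter m Lop c =1 (fun _ => 0).
Proof. by elim: m => [//|m IH] e; apply: Lop0; apply: IH. Qed.

Lemma commut2 k c : boxed c -> homf k c -> forall b,
  Fop (Lop c) b = Lop (Fop c) b + ((mdeg M)%:R - (2 * k)%:R) * c b.
Proof.
move=> bc hc b; case bM: (b <= M)%MM.
  have := commut c bM; have [->|cb] := eqVneq (c b) 0.
    by rewrite !mulr0 !addr0.
  rewrite (hc _ cb) => e; apply: (addIr ((2 * k)%:R * c b)).
  by rewrite -e mulrBl -addrA subrK.
have -> : c b = 0 by apply/eqP; apply: contraFT bM; apply: bc.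
rewrite mulr0 addr0 {2}/Lop bM /Fop; apply: big1 => j _.
rewrite /Lop; case: ifP => bjM; last by rewrite mulr0.
by move: bM; rewrite (lepm_trans (lem_addr b U_(j)) bjM).
Qed.

Lemma iterL_hom k c m : homf k c -> homf (k + m) (iter m Lop c).
Proof.
elim: m => [|m IH] hc; first by rewrite addn0.
by rewrite addnS; apply: Lop_hom; apply: IH.
Qed.

Lemma iterL_boxed c m : boxed c -> boxed (iter m Lop c).
Proof. by case: m => [//|m] _; apply: Lop_boxed. Qed.

Definition gam k m : K := ((m.+1 * mdeg M)%:R - (m.+1 * (2 * k + m))%:R).

Lemma commut_iter k v : boxed v -> homf k v -> forall m b,
  Fop (iter m.+1 Lop v) b = iter m.+1 Lop (Fop v) b + gam k m * iter m Lop v b.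
Proof.
move=> bv hv; elim=> [|m IH] b.
  by rewrite /= (commut2 bv hv) /gam !mul1n addn0.
have hw := @iterL_hom k v m.+1 hv.
rewrite [iter m.+2 Lop v]/= (commut2 (@iterL_boxed v m.+1 bv) hw).
rewrite (Lop_ext IH) Lop_lin -addrA; congr (_ + _).
rewrite -[Lop (iter m Lop v) b]/(iter m.+1 Lop v b) -mulrDl; congr (_ * _).
rewrite /gam !natrM !natrD; ring.
Qed.


Lemma descent (charK : [pchar K] =i pred0) k v : boxed v -> homf k v ->
  Fop v =1 (fun _ => 0) -> forall d, (d <= mdeg M - 2 * k)%N ->
  iter d Lop v =1 (fun _ => 0) -> v =1 (fun _ => 0).
Proof.
have ch := (pcharf0P _).1 charK.
move=> bv hv Fv; elim=> [//|d IH] hd Ld; apply: IH; first by lia.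
move=> b; have := commut_iter bv hv d b.
rewrite (Fop0 Ld) (iterL0 _ Fv) add0r => /esym /eqP; rewrite mulf_eq0 => /orP [|/eqP //].
rewrite /gam -natrB; last by rewrite leq_mul2l; apply/orP; right; lia.
rewrite ch => /eqP; nia.
Qed.

Lemma lefschetz (charK : [pchar K] =i pred0) k v : (2 * k <= mdeg M)%N -> boxed v -> homf k v ->
  (forall b, iter (mdeg M - 2 * k) Lop v b = 0) -> forall b, v b = 0.
Proof.
elim: k v => [|k IH] v hk bv hv Lv.
  have Fv0 : Fop v =1 (fun _ => 0).
    move=> b; apply/eqP; apply: contraT => /(Fop_hom hv); by [].
  exact: (descent charK bv hv Fv0 (leqnn _) Lv).
have Fv0 : Fop v =1 (fun _ => 0).
  apply: IH.
  - by lia.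
  - exact: Fop_boxed.
  - by move=> b /(Fop_hom hv) [].
  have -> : (mdeg M - 2 * k = (mdeg M - 2 * k.+1).+2)%N by lia.
  set d := (mdeg M - 2 * k.+1)%N.
  have H1 : iter d.+1 Lop (Fop v) =1 (fun _ => 0).
    move=> b; apply/eqP; rewrite -(subr_eq0 _ 0) subr0.
    have := commut_iter bv hv d b; rewrite (Lv b) mulr0 addr0 => <-.
    by rewrite (Fop0 (Lop0 Lv)).
  by move=> b; apply: (Lop0 H1).
exact: (descent charK bv hv Fv0 (leqnn _) Lv).
Qed.

End SL2.

Section Poly.
Variables (K : fieldType) (n : nat).
Local Notation mon := 'X_{1..n}.
Local Notation mp := {mpoly K[n]}.

Definition proj (M : mon) (p : mp) : mon -> K := fun b => if (b <= M)%MM then p@_b else 0.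

Lemma coeffXi_mul (p : mp) (i : 'I_n) b :
  ('X_i * p)@_b = if (0 < b i)%N then p@_(b - U_(i))%MM else 0.
Proof.
rewrite -commr_mpolyX; case: ifP => bi.
  have Ub : (U_(i) <= b)%MM.
    by apply/mnm_lepP => l; rewrite mnm1E; case: eqP => [<-|] /=; lia.
  by rewrite -{1}(submK Ub) addmC mcoeffMX.
apply/eqP; rewrite mcoeff_eq0 (perm_mem (msuppMX _ _) b); apply/mapP => -[m' _ e].
by move: bi; rewrite e mnmDE mnm1E eqxx; lia.
Qed.

Lemma coeff_ell_mul (p : mp) b :
  (ell n K * p)@_b = \sum_(i < n) if (0 < b i)%N then p@_(b - U_(i))%MM else 0.
Proof.
rewrite /ell big_distrl /= raddf_sum; apply: eq_bigr => i _; exact: coeffXi_mul.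
Qed.

Lemma proj_ell M (p : mp) : proj M (ell n K * p) =1 Lop M (proj M p).
Proof.
move=> b; rewrite /proj /Lop; case: ifP => bM //.
rewrite coeff_ell_mul; apply: eq_bigr => i _; case: ifP => // _.
by rewrite (lepm_trans (lem_subr _ _) bM).
Qed.

Lemma proj_ellX M (p : mp) m : proj M (ell n K ^+ m * p) =1 iter m (Lop M) (proj M p).
Proof.
elim: m => [|m IH] b; first by rewrite expr0 mul1r.
by rewrite exprS -mulrA proj_ell /=; apply: Lop_ext.
Qed.

Variable I : {pred mp}.
Hypothesis hI : is_monomial_ideal I.

Lemma inI_sum (p : mp) : (forall m, m \in msupp p -> 'X_[m] \in I) -> p \in I.
Proof.
case: hI => -[I0 ID IM] _ H.
rewrite (mpolyE p) big_seq; apply: (big_ind (fun q => q \in I)) => //.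
by move=> m /H Xm; rewrite -mul_mpolyC; apply: IM.
Qed.

Lemma inI_mono (m m' : mon) : (m <= m')%MM -> 'X_[m] \in I -> 'X_[m'] \in I.
Proof.
case: hI => -[I0 ID IM] _ mm Xm.
by rewrite -(submK mm) mpolyXD; apply: IM.
Qed.

Lemma coeff_inI (p : mp) (m M : mon) : p \in I -> (m <= M)%MM -> 'X_[M] \notin I -> p@_m = 0.
Proof.
case: hI => _ HM pI mM XM; apply/eqP; rewrite mcoeff_eq0; apply/negP => /(HM _ _ pI) Xm.
by move: XM; rewrite (inI_mono mM Xm).
Qed.

Lemma homogX (m : mon) : homog_deg (mdeg m) ('X_[m] : mp).
Proof. by rewrite /homog_deg dhomogX. Qed.

Variable t : nat.
Hypothesis hA : artinian_socle_degree I t.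
Hypothesis hL : is_level I t.

Lemma notinI_deg (m : mon) : 'X_[m] \notin I -> (mdeg m <= t)%N.
Proof.
move=> Xm; rewrite leqNgt; apply/negP => lt.
by move: Xm; rewrite (hA.1 _ lt _ (homogX m)).
Qed.

Lemma socle_mon (m : mon) : 'X_[m] \notin I ->
  (forall i : 'I_n, 'X_[(m + U_(i))%MM] \in I) -> mdeg m = t.
Proof.
move=> Xm Hi.
have soc : in_socle I 'X_[m].
  move=> a ha; apply: inI_sum => w; rewrite (perm_mem (msuppMX a m) w).
  case/mapP => u ua ->.
  have /eqP := dhomog_mf ha ua; case/mdeg1P => i /eqP ->; exact: Hi.
case: ((hL _).1 soc) => g [hg Hg].
apply/eqP; apply: contraT => ne.
have := (proj2 hI) _ m Hg; rewrite mcoeff_msupp mcoeffB mcoeffX eqxx.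
rewrite (dhomog_nemf_coeff hg ne) subr0 oner_neq0 => /(_ isT) Xm'.
by rewrite Xm' in Xm.
Qed.

Lemma extend_mon d (m : mon) : (t - mdeg m <= d)%N -> 'X_[m] \notin I ->
  exists M : mon, [/\ (m <= M)%MM, 'X_[M] \notin I & mdeg M = t].
Proof.
elim: d m => [|d IH] m hd Xm.
  exists m; split => //; first exact: lepm_refl.
  by have := notinI_deg Xm; lia.
case: (boolP [exists i : 'I_n, 'X_[(m + U_(i))%MM] \notin I]).
  case/existsP => i Xi.
  have := notinI_deg Xi. rewrite mdegD mdeg1 => lt.
  have [M [mM XM dM]] := IH (m + U_(i))%MM (ltac:(rewrite mdegD mdeg1; lia)) Xi.
  by exists M; split => //; apply: lepm_trans mM; apply: lem_addr.
rewrite negb_exists => /forallP H.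
exists m; split => //; first exact: lepm_refl.
by apply: socle_mon => // i; move: (H i); rewrite negbK.
Qed.

Lemma proj_hom k (M : mon) (f : mp) : homog_deg k f -> homf k (proj M f).
Proof.
move=> hf b; rewrite /proj; case: ifP => _; last by rewrite eqxx.
by rewrite -mcoeff_msupp => /(dhomog_mf hf).
Qed.

Lemma proj_boxed (M : mon) (f : mp) : boxed M (proj M f).
Proof. by move=> b; rewrite /proj; case: ifP => //; rewrite eqxx. Qed.

Lemma main_inj (charK : [pchar K] =i pred0) k (f : mp) : (2 * k < t)%N -> homog_deg k f ->
  ell n K ^+ (t - 2 * k) * f \in I -> f \in I.
Proof.
move=> kt hf Hin; apply: inI_sum => m mf; apply: contraT => Xm.
have [M [mM XM dM]] := @extend_mon t m (leq_subr _ _) Xm.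
have z : forall b, iter (mdeg M - 2 * k) (Lop M) (proj M f) b = 0.
  by move=> b; rewrite dM -proj_ellX /proj; case: ifP => // bM; apply: coeff_inI Hin bM XM.
have := @lefschetz K n M charK k (proj M f) (ltac:(lia)) (@proj_boxed M f) (proj_hom (M:=M) hf) z m.
by rewrite /proj mM => e; move: mf; rewrite mcoeff_msupp e eqxx.
Qed.

End Poly.

Theorem lemma2p3 (K : fieldType) (n : nat) (I : {pred {mpoly K[n]}}) (t : nat) :
  [pchar K] =i pred0 ->
  is_monomial_ideal I ->
  artinian_socle_degree I t ->
  is_level I t ->
  forall k : nat, (2 * k < t)%N ->
    mult_injective I ((ell n K) ^+ (t - 2 * k)) k /\
    mult_injective I (ell n K) k.
Proof.
move=> charK hI hA hL k kt; split.
  by move=> f hf Hin; apply: (main_inj hI hA hL charK kt hf Hin).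
move=> f hf Hin; apply: (main_inj hI hA hL charK kt hf).
have -> : (t - 2 * k = (t - 2 * k).-1.+1)%N by lia.
rewrite exprSr -mulrA; case: hI => -[_ _ IM] _; exact: IM.
Qed.
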